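(* Let $R$ be a commutative ring with $1$ and let $(S,m)$ be a multiset in $R$ (a finite subset $S\subseteq R$ with multiplicities $m:S\to\{1,2,\dots\}$) such that $s-s^*$ is a unit of $R$ for all $s\ne s^*$ in $S$. Let $d(S)=\sum_{s\in S}m(s)$ and $t=d(S)-1$. Then there exist elements $\alpha(s,u)\in R$ for all $s\in S$ and $0\le u<m(s)$ such that for every integer $\ell\ge 0$, $$\sum_{s\in S}\sum_{0\le u<m(s)}\alpha(s,u)\binom{\ell}{u}s^{\ell-u}=\begin{cases}0&\text{if }\ell<t,\\1&\text{if }\ell=t.\end{cases}$$ (No condition is imposed for $\ell>t$.)
   Context: By convention, a term $\binom{\ell}{u}s^{\ell-u}$ with $u>\ell$ is $0$ (since $\binom{\ell}{u}=0$). *)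

(* Defs.v *)
From mathcomp Require Import all_boot all_order all_algebra.
Set Implicit Arguments. Unset Strict Implicit. Unset Printing Implicit Defensive.
Import GRing.Theory.
Local Open Scope ring_scope.

Definition multiset_in (R : comUnitRingType) (S : seq R) (m : R -> nat) : Prop :=
  uniq S /\ (forall s, s \in S -> (0 < m s)%N).

Definition degS (R : comUnitRingType) (S : seq R) (m : R -> nat) : nat :=
  (\sum_(s <- S) m s)%N.

(* The combination sum_{s in S} sum_{u < m(s)} alpha(s,u) C(l,u) s^(l-u);
   the term with u > l vanishes since C(l,u) = 0. *)
Definition comb (R : comUnitRingType) (S : seq R) (m : R -> nat)
  (alpha : R -> nat -> R) (l : nat) : R :=
  \sum_(s <- S) \sum_(u < m s) alpha s u * ('C(l, u))%:R * s ^+ (l - u).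

(* Main.v *)
Require Import Defs.
From mathcomp Require Import all_boot all_order all_algebra.
From mathcomp Require Import ring.
Import GRing.Theory.
Local Open Scope ring_scope.
Set Warnings "-all".

Section Aux.
Variable R : comUnitRingType.

Definition combs (s : R) (k : nat) (a : nat -> R) (l : nat) : R :=
  \sum_(u < k) a u * ('C(l, u))%:R * s ^+ (l - u).

Lemma fS0 (s : R) l :
  ('C(l.+1, 0))%:R * s ^+ (l.+1 - 0) = s * (('C(l, 0))%:R * s ^+ (l - 0)).
Proof. by rewrite !bin0 !subn0 exprS !mul1r. Qed.

Lemma fS (s : R) u l :
  ('C(l.+1, u.+1))%:R * s ^+ (l.+1 - u.+1)
  = s * (('C(l, u.+1))%:R * s ^+ (l - u.+1)) + ('C(l, u))%:R * s ^+ (l - u).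
Proof.
rewrite binS natrD mulrDl subSS; congr (_ + _).
case: (ltnP u l) => hul.
  by rewrite -(subnSK hul) exprS mulrCA.
by rewrite bin_small ?ltnS // !mul0r mulr0.
Qed.

Lemma combs0 s a l : combs s 0 a l = 0.
Proof. by rewrite /combs big_ord0. Qed.

Lemma combsSl s k a l :
  combs s k.+1 a l.+1 = s * combs s k.+1 a l + combs s k (fun u => a u.+1) l.
Proof.
rewrite /combs !big_ord_recl /= mulrDr addrAC -!addrA; congr (_ + _).
  by rewrite -!mulrA fS0 mulrCA.
rewrite mulr_sumr -big_split /=; apply: eq_bigr => i _.
by rewrite /bump /= !add1n -!mulrA fS mulrDr addrC mulrCA.
Qed.

Lemma combsSr s k a l : combs s k.+1 a l = combs s k a l + a k * ('C(l, k))%:R * s ^+ (l - k).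
Proof. by rewrite /combs big_ord_recr. Qed.

Lemma combsD s k a b l :
  combs s k (fun u => a u + b u) l = combs s k a l + combs s k b l.
Proof. by rewrite /combs -big_split; apply: eq_bigr => i _; rewrite !mulrDl. Qed.

Definition invb (s0 s : R) (k : nat) (g : nat -> R) (u : nat) : R :=
  \sum_(j < k - u) (-1) ^+ j * (s - s0)^-1 ^+ j.+1 * g (u + j)%N.

Lemma invb_eq s0 s k g u : (s - s0) \is a GRing.unit -> (u < k)%N ->
  (s - s0) * invb s0 s k g u + invb s0 s k g u.+1 = g u.
Proof.
move=> hu huk; rewrite /invb -(subnSK huk) big_ord_recl /= addn0.
rewrite mulrDr expr0 mul1r expr1 mulrA mulrV // mul1r -addrA.
rewrite -[RHS]addr0; congr (_ + _).
rewrite mulr_sumr -big_split /= big1 // => j _.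
rewrite /bump /= add1n addSnnS (exprS (-1)) (exprS (s - s0)^-1).
set x := (-1) ^+ j; set y := _ ^+ j.+1; set z := g _; set c := _^-1.
have -> : (s - s0) * (-1 * x * (c * y) * z) = - ((s - s0) * c) * (x * y * z) by ring.
by rewrite mulrV // mulNr mul1r addNr.
Qed.

Lemma L1 s0 s k g l : (s - s0) \is a GRing.unit ->
  combs s k (invb s0 s k g) l.+1 - s0 * combs s k (invb s0 s k g) l = combs s k g l.
Proof.
move=> hu; case: k => [|k]; first by rewrite !combs0 mulr0 subr0.
rewrite combsSl.
have -> : combs s k (fun u => invb s0 s k.+1 g u.+1) l
        = combs s k.+1 (fun u => invb s0 s k.+1 g u.+1) l.
  by rewrite combsSr /invb subnn big_ord0 !mul0r addr0.
rewrite addrAC -mulrBl mulr_sumr -big_split /=; apply: eq_bigr => i _.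
by rewrite !mulrA -mulrDl -mulrDl invb_eq.
Qed.

Definition shiftb (g : nat -> R) (u : nat) : R := if u is v.+1 then g v else 0.

Lemma L2 s0 k g l :
  combs s0 k.+1 (shiftb g) l.+1 - s0 * combs s0 k.+1 (shiftb g) l = combs s0 k g l.
Proof. by rewrite combsSl addrAC subrr add0r. Qed.

End Aux.
Arguments shiftb {R}.
Arguments invb {R}.
Arguments combs {R}.

Lemma main_ind (R : comUnitRingType) (S : seq R) :
  uniq S ->
  (forall s s', s \in S -> s' \in S -> s != s' -> (s - s') \is a GRing.unit) ->
  forall n (m : R -> nat), degS S m = n ->
  exists alpha : R -> nat -> R,
    forall l : nat,
      ((l.+1 < n)%N -> comb S m alpha l = 0) /\
      ((l.+1 = n)%N -> comb S m alpha l = 1).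
Proof.
move=> hU hunit n; elim: n => [|n IH] m hm.
  by exists (fun _ _ => 0) => l; split.
have : has (fun s => 0 < m s)%N S.
  apply/negPn/negP => /hasPn H; move: hm.
  rewrite /degS big_seq big1 // => s /H.
  by rewrite -leqNgt leqn0 => /eqP.
case/hasP => s0 s0S ms0.
pose m' := fun s => if s == s0 then (m s).-1 else m s.
have hm' : degS S m' = n.
  move: hm; rewrite /degS !(bigD1_seq s0) //= /m' eqxx.
  rewrite [X in _ -> (_ + X)%N = _](eq_bigr m) => [|s /negbTE ->] //.
  by rewrite -{1}(prednK ms0) addSn => -[].
have [alpha' Hg] := IH m' hm'.
pose alpha1 := fun s => if s == s0 then shiftb (alpha' s0)
                       else invb s0 s (m s) (alpha' s).
have rec1 : forall l, comb S m alpha1 l.+1 - s0 * comb S m alpha1 l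
                      = comb S m' alpha' l.
  move=> l; rewrite /comb mulr_sumr -sumrB; apply: eq_big_seq => s sS.
  change (combs s (m s) (alpha1 s) l.+1 - s0 * combs s (m s) (alpha1 s) l
          = combs s (m' s) (alpha' s) l).
  case: (eqVneq s s0) => [->|ne].
    have E : m s0 = (m' s0).+1 by rewrite /m' eqxx prednK.
    by rewrite E /alpha1 eqxx L2.
  have E : m' s = m s by rewrite /m' (negbTE ne).
  by rewrite E /alpha1 (negbTE ne) L1 // hunit.
pose c := (if n == 0%N then 1 else 0) - comb S m alpha1 0.
pose alpha := fun s u => alpha1 s u + (if (s == s0) && (u == 0%N) then c else 0).
have corr : forall l, comb S m alpha l = comb S m alpha1 l + c * s0 ^+ l.
  move=> l; rewrite /comb.
  have -> : \sum_(s <- S) \sum_(u < m s) alpha s u * ('C(l, u))%:R * s ^+ (l - u)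
     = \sum_(s <- S) (combs s (m s) (alpha1 s) l
          + combs s (m s) (fun u => if (s == s0) && (u == 0%N) then c else 0) l).
    by apply: eq_bigr => s _; rewrite -combsD.
  rewrite big_split /=; congr (_ + _).
  rewrite (bigD1_seq s0) //= big1 => [|s /negbTE ->]; last first.
    by rewrite /combs big1 // => u _; rewrite /= !mul0r.
  rewrite addr0 eqxx /combs -(prednK ms0) big_ord_recl /= bin0 subn0 mulr1.
  by rewrite big1 ?addr0 // => u _; rewrite !mul0r.
exists alpha.
have hrec : forall l, comb S m alpha l.+1 = s0 * comb S m alpha l + comb S m' alpha' l.
  move=> l; rewrite -rec1 !corr exprS; ring.
have h0 : comb S m alpha 0 = if n == 0%N then 1 else 0.
  by rewrite corr expr0 mulr1 /c addrC subrK.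
have hz : forall l, (l < n)%N -> comb S m alpha l = 0.
  elim=> [|l IHl] hl.
    by apply: (eq_trans h0); rewrite ifN // -lt0n.
  by rewrite hrec IHl ?(ltnW hl) // mulr0 add0r (proj1 (Hg l)).
move=> l; split.
  by rewrite ltnS => /hz.
case=> ->; case: (posnP n) => [n0|npos].
  by rewrite n0 h0 n0.
rewrite -{1}(prednK npos) hrec hz ?ltn_predL // mulr0 add0r (proj2 (Hg n.-1)) //.
by rewrite prednK.
Qed.

Theorem lemma4 (R : comUnitRingType) (S : seq R) (m : R -> nat) :
  multiset_in S m ->
  (forall s s', s \in S -> s' \in S -> s != s' -> (s - s') \is a GRing.unit) ->
  exists alpha : R -> nat -> R,
    forall l : nat,
      ((l.+1 < degS S m)%N -> comb S m alpha l = 0) /\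
      ((l.+1 = degS S m)%N -> comb S m alpha l = 1).
Proof. by move=> [hU _] hunit; apply: main_ind. Qed.
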